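(* Fix $K\ge1$, points $\mathbf{w}_1,\dots,\mathbf{w}_K\in\mathbb{R}^2$ and constants $H>0$, $\rho_0>0$, $\sigma^2>0$, $r^*>0$, $P_c\ge0$, $E_1,\dots,E_K>0$, $\tilde P_1,\dots,\tilde P_K>0$. For $\mathbf{q}\in\mathbb{R}^2$ write $d_k=\sqrt{\|\mathbf{q}-\mathbf{w}_k\|^2+H^2}$ and $h_k=\rho_0/d_k^2$. Problem (P1): minimize $\zeta$ over $(\zeta,\mathbf{q},\mathbf{p},\pi)$, $\zeta\in\mathbb{R}$, $\mathbf q\in\mathbb{R}^2$, $\mathbf p\in\mathbb{R}^K$, $\pi$ a permutation of $\{1,\dots,K\}$, subject to, for all $m$: $p_{\pi(m)}+P_c\le\zeta E_{\pi(m)}$; $0\le p_{\pi(m)}\le\tilde P_{\pi(m)}$; $\log_2\big(1+\frac{p_{\pi(m)}h_{\pi(m)}}{\sum_{n=m+1}^Kp_{\pi(n)}h_{\pi(n)}+\sigma^2}\big)\ge r^*$; and $d_{\pi(1)}\le\dots\le d_{\pi(K)}$. Problem (P2): minimize $\zeta$ over $(\zeta,\mathbf{q},\mathbf{p},\boldsymbol\alpha)$ with $\boldsymbol\alpha=(\alpha_{k,j})_{k,j=1}^K$, subject to, for all $k$: $p_k+P_c\le\zeta E_k$; $0\le p_k\le\tilde P_k$; $\log_2\big(1+\frac{p_kh_k}{\sum_{j\ne k}\alpha_{k,j}p_jh_j+\sigma^2}\big)\ge r^*$; for all $k\ne j$: $\alpha_{k,j}=0$ if $d_k>d_j$, $\alpha_{k,j}=1$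 if $d_k<d_j$, $\alpha_{k,j}\in\{0,1\}$ if $d_k=d_j$; $\alpha_{k,k}=0$; $\alpha_{k,j}+\alpha_{j,k}=1$ for $k\ne j$; $\alpha_{k,j}+\alpha_{j,i}-1\le\alpha_{k,i}$ for all $k,j,i$. Then the optimal values of (P1) and (P2) are equal.
   Context: (P1) models maximizing the minimum device lifetime $E_k/(p_k+P_c)$ (via $\zeta=1/\text{lifetime}$) in uplink NOMA to a UAV at horizontal position $\mathbf q$ and altitude $H$ with permutation decoding order $\pi$; (P2) is the same with binary decoding-order variables ($\alpha_{k,j}=1$: device $k$ decoded before device $j$). Optimal value means the infimum of $\zeta$ over the feasible set. *)

(* Defs.v *)
From HB Require Import structures.
From mathcomp Require Import all_boot all_order all_algebra perm.
From mathcomp Require Import all_classical all_reals all_analysis.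
Set Implicit Arguments. Unset Strict Implicit. Unset Printing Implicit Defensive.
Import Order.TTheory GRing.Theory Num.Theory.
Local Open Scope ring_scope.
Local Open Scope classical_set_scope.

Section Defs.
Variable R : realType.
Variable K : nat.

Definition dist3 (H : R) (q w : R * R) : R :=
  Num.sqrt ((q.1 - w.1) ^+ 2 + (q.2 - w.2) ^+ 2 + H ^+ 2).

Definition gain (rho0 H : R) (q w : R * R) : R := rho0 / (dist3 H q w) ^+ 2.

Definition log2 (x : R) : R := ln x / ln 2.

Variables (w : 'I_K -> R * R) (H rho0 sigma2 rstar Pc : R)
          (E Pt : 'I_K -> R).

Definition feasibleP1 (zeta : R) (q : R * R) (p : 'I_K -> R)
    (pi : {perm 'I_K}) : Prop :=
  let d := fun k => dist3 H q (w k) in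
  let h := fun k => gain rho0 H q (w k) in
  (forall m : 'I_K,
     [/\ p (pi m) + Pc <= zeta * E (pi m),
         0 <= p (pi m) <= Pt (pi m) &
         log2 (1 + p (pi m) * h (pi m) /
               (\sum_(n : 'I_K | (m < n)%N) p (pi n) * h (pi n) + sigma2))
           >= rstar]) /\
  (forall m n : 'I_K, (m <= n)%N -> d (pi m) <= d (pi n)).

(* feasibility in (P2); alpha k j = 1 : device k decoded before device j *)
Definition feasibleP2 (zeta : R) (q : R * R) (p : 'I_K -> R)
    (alpha : 'I_K -> 'I_K -> R) : Prop :=
  let d := fun k => dist3 H q (w k) in
  let h := fun k => gain rho0 H q (w k) in
  (forall k : 'I_K,
     [/\ p k + Pc <= zeta * E k,
         0 <= p k <= Pt k &
         log2 (1 + p k * h k /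
               (\sum_(j : 'I_K | j != k) alpha k j * p j * h j + sigma2))
           >= rstar]) /\
  (forall k j : 'I_K, k != j ->
     [/\ d k > d j -> alpha k j = 0,
         d k < d j -> alpha k j = 1 &
         d k = d j -> alpha k j = 0 \/ alpha k j = 1]) /\
  (forall k : 'I_K, alpha k k = 0) /\
  (forall k j : 'I_K, k != j -> alpha k j + alpha j k = 1) /\
  (forall k j i : 'I_K, alpha k j + alpha j i - 1 <= alpha k i).

Definition optP1 : \bar R :=
  ereal_inf [set (zeta%:E) | zeta in
    [set z | exists q p pi, feasibleP1 z q p pi]].

Definition optP2 : \bar R :=
  ereal_inf [set (zeta%:E) | zeta in
    [set z | exists q p alpha, feasibleP2 z q p alpha]].

End Defs.

(* Main.v *)
Require Import Defs.
From HB Require Import structures.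
From mathcomp Require Import all_boot all_order all_algebra perm.
From mathcomp Require Import all_classical all_reals all_analysis.
From mathcomp Require Import lra.
Import Order.TTheory GRing.Theory Num.Theory.
Local Open Scope ring_scope.

Lemma key_sum (R : realType) (n : nat) (pi : {perm 'I_n}) (alpha : 'I_n -> 'I_n -> R)
  (a b : 'I_n -> R) (m : 'I_n) :
  (forall k j, alpha k j = (((pi^-1)%g k < (pi^-1)%g j)%N)%:R) ->
  \sum_(j : 'I_n | j != pi m) alpha (pi m) j * a j * b j =
  \sum_(n0 : 'I_n | (m < n0)%N) a (pi n0) * b (pi n0).
Proof.
move=> ha.
rewrite [RHS](reindex_inj (h := (pi^-1)%g) (@perm_inj _ _)) /=.
rewrite big_mkcond [RHS]big_mkcond /=; apply: eq_bigr => j _.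
rewrite !permKV ha permK.
case: (eqVneq j (pi m)) => [->|ne]; first by rewrite ?eqxx permK ltnn.
rewrite ?ne; by case: (m < (pi^-1)%g j)%N; rewrite ?mul1r ?mul0r.
Qed.

Theorem proposition4 (R : realType) (K' : nat) (w : 'I_K'.+1 -> R * R)
    (H rho0 sigma2 rstar Pc : R) (E Pt : 'I_K'.+1 -> R)
    (hH : 0 < H) (hrho0 : 0 < rho0) (hsigma2 : 0 < sigma2) (hrstar : 0 < rstar)
    (hPc : 0 <= Pc) (hE : forall k, 0 < E k) (hPt : forall k, 0 < Pt k) :
  optP1 w H rho0 sigma2 rstar Pc E Pt = optP2 w H rho0 sigma2 rstar Pc E Pt.
Proof.
rewrite /optP1 /optP2.
congr (ereal_inf [set _%:E | _ in _]).
apply/funext => z; apply/propext; split.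
- move=> [q [p [pi [F1 F2]]]].
  set alpha := fun k j : 'I_K'.+1 => (((pi^-1)%g k < (pi^-1)%g j)%N)%:R : R.
  have ha : forall k j, alpha k j = (((pi^-1)%g k < (pi^-1)%g j)%N)%:R by [].
  exists q, p, alpha; split; [|split; [|split; [|split]]].
  + move=> k; have [A1 A2 A3] := F1 ((pi^-1)%g k).
    rewrite permKV in A1 A2 A3; split => //.
    have E0 := @key_sum R _ pi alpha p (fun j => gain rho0 H q (w j)) ((pi^-1)%g k) ha.
    by rewrite permKV in E0; rewrite E0.
  + move=> k j nkj; split.
    * move=> dlt; rewrite ha; case: ltnP => // lt.
      have := F2 _ _ (ltnW lt); rewrite !permKV => dle.
      by move: dlt; rewrite ltNge dle.
    * move=> dlt; rewrite ha; case: ltnP => // le.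
      have := F2 _ _ le; rewrite !permKV => dle.
      by move: dlt; rewrite ltNge dle.
    * by move=> _; rewrite ha; case: (_ < _)%N; [right|left].
  + by move=> k; rewrite ha ltnn.
  + move=> k j nkj; rewrite !ha.
    have : (pi^-1)%g k != (pi^-1)%g j by apply: contra nkj => /eqP /perm_inj ->.
    rewrite neq_ltn; case/orP => lt.
    * by rewrite lt ltnNge (ltnW lt) /= addr0.
    * by rewrite lt ltnNge (ltnW lt) /= add0r.
  + move=> k j i; rewrite !ha.
    case: (ltnP ((pi^-1)%g k) ((pi^-1)%g j)) => h1; case: (ltnP ((pi^-1)%g j) ((pi^-1)%g i)) => h2.
    * rewrite (ltn_trans h1 h2) /=. lra.
    * case: (_ < _)%N => /=; lra.
    * case: (_ < _)%N => /=; lra.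
    * case: (_ < _)%N => /=; lra.
- move=> [q [p [alpha [F1 [F2 [F3 [F4 F5]]]]]]].
  have a01 : forall k j, alpha k j = 0 \/ alpha k j = 1.
    move=> k j; case: (eqVneq k j) => [->|nkj]; first by left.
    have [G1 G2 G3] := F2 k j nkj.
    case: (ltgtP (dist3 H q (w k)) (dist3 H q (w j))) => c.
    + by right; apply: G2.
    + by left; apply: G1.
    + by apply: G3.
  pose A k := [set j | alpha j k == 1].
  have Alt : forall k j, alpha k j = 1 -> (#|A k| < #|A j|)%N.
    move=> k j hkj; apply: proper_card; apply/properP; split.
      apply/fintype.subsetP => i; rewrite !inE => /eqP hik.
      have := F5 i k j; rewrite hik hkj addrK => h1.
      case: (a01 i j) => h2; last by rewrite h2.
      by move: h1; rewrite h2 ler10.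
    exists k; rewrite !inE ?hkj ?F3 //.
    by rewrite eq_sym oner_eq0.
  have Ack : forall k, (#|A k| < K'.+1)%N.
    move=> k; rewrite -[X in (_ < X)%N]card_ord -cardsT; apply: proper_card.
    apply/properP; split; first exact: finset.subsetT.
    by exists k; rewrite !inE ?F3 // eq_sym oner_eq0.
  pose f k := Ordinal (Ack k).
  have finj : injective f.
    move=> k j /(congr1 val) /= ekj; apply/eqP; apply/negPn/negP => nkj.
    have := F4 k j nkj.
    case: (a01 k j) => h1; case: (a01 j k) => h2; rewrite h1 h2.
    + by move/eqP; rewrite addr0 eq_sym oner_eq0.
    + by move=> _; have := Alt _ _ h2; rewrite ekj ltnn.
    + by move=> _; have := Alt _ _ h1; rewrite ekj ltnn.
    + by move/eqP; rewrite -[X in _ == X]addr0 => /eqP /addrI /eqP; rewrite oner_eq0.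
  pose s := perm finj.
  have hs : forall k j, alpha k j = ((s k < s j)%N)%:R.
    move=> k j; rewrite !permE /=.
    case: (eqVneq k j) => [->|nkj]; first by rewrite F3 ltnn.
    case: (a01 k j) => h1.
      have := F4 k j nkj; rewrite h1 add0r => h2.
      by rewrite ltnNge ltnW // Alt.
    by rewrite h1 Alt.
  exists q, p, (s^-1)%g; split.
  + move=> m; have ha : forall k j, alpha k j = (((s^-1)^-1)%g k < ((s^-1)^-1)%g j)%:R.
      by move=> k j; rewrite invgK hs.
    have [A1 A2 A3] := F1 ((s^-1)%g m); split => //.
    have E0 := @key_sum R _ (s^-1)%g alpha p (fun j => gain rho0 H q (w j)) m ha.
    by rewrite -E0.
  + move=> m n; rewrite leq_eqVlt; case/orP => [/eqP/val_inj -> //| lt].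
    have := hs ((s^-1)%g m) ((s^-1)%g n); rewrite !permKV lt => h1.
    rewrite leNgt; apply/negP => c.
    have nmn : (s^-1)%g m != (s^-1)%g n.
      by apply: contraTneq lt => /perm_inj ->; rewrite ltnn.
    have [G1 _ _] := F2 _ _ nmn.
    by move: (G1 c); rewrite h1 => /eqP; rewrite oner_eq0.
Qed.
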